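(* Let $k$ be a field, $\Delta$ a finite connected quiver without oriented cycles, $X$ a finite length $k\Delta$-module and $M$ an endo-finite $k\Delta$-module. If $\langle\operatorname{\bold{dim}}X,\operatorname{\bold{Dim}}M\rangle>0$, then $\operatorname{Hom}(X,M)\neq 0$.
   Context: Modules are representations $(M_i,M_\alpha)$ of $\Delta$ with vertex set $\Delta_0$, arrow set $\Delta_1$, arrows $\alpha\colon s(\alpha)\to t(\alpha)$. $E(M)=\operatorname{End}(M)^{\mathrm{op}}$; $M$ is endo-finite if it has finite length as an $E(M)$-module. $\operatorname{\bold{dim}}X\in\mathbb Z^{\Delta_0}$ has $i$-th entry $\dim_kX_i$, and $(\operatorname{\bold{Dim}}M)_i$ is the length of $M_i$ as an $E(M)$-module. The Euler form is $\langle x,y\rangle=\sum_{i\in\Delta_0}x_iy_i-\sum_{\alpha\in\Delta_1}x_{s(\alpha)}y_{t(\alpha)}$. *)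

(* Defs.v *)
From HB Require Import structures.
From mathcomp Require Import all_boot all_order all_algebra.
Set Implicit Arguments. Unset Strict Implicit. Unset Printing Implicit Defensive.
Import Order.TTheory GRing.Theory Num.Theory.
Local Open Scope ring_scope.

Section Quiver.
Variables (n : nat) (Q1 : finType) (s t : Q1 -> 'I_n).

Definition arrow_rel : rel 'I_n := fun i j => [exists a : Q1, (s a == i) && (t a == j)].

Definition undir_rel : rel 'I_n := fun i j => arrow_rel i j || arrow_rel j i.

Definition quiver_connected : Prop :=
  (0 < n)%N /\ forall i j : 'I_n, connect undir_rel i j.

(* no oriented cycles (including loops) *)
Definition quiver_acyclic : Prop :=
  forall i j : 'I_n, arrow_rel i j -> ~~ connect arrow_rel j i.

Definition euler_form (x y : 'I_n -> nat) : int :=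
  (\sum_(i < n) ((x i * y i)%N)%:Z - \sum_(a : Q1) ((x (s a) * y (t a))%N)%:Z)%R.

End Quiver.


(* A representation of the quiver (k-spaces V i, possibly infinite dimensional,
   and k-linear maps along arrows) *)
Definition rep_maps (k : fieldType) (n : nat) (Q1 : finType) (s t : Q1 -> 'I_n)
  (V : 'I_n -> lmodType k) : Type :=
  forall a : Q1, {linear V (s a) -> V (t a)}.

Definition is_rep_hom (k : fieldType) (n : nat) (Q1 : finType) (s t : Q1 -> 'I_n)
  (V W : 'I_n -> lmodType k) (MV : rep_maps s t V) (MW : rep_maps s t W)
  (g : forall i, {linear V i -> W i}) : Prop :=
  forall (a : Q1) (x : V (s a)), g (t a) (MV a x) = MW a (g (s a) x).

(* Endomorphisms of M = elements of End(M) (E(M) is its opposite ring) *)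
Definition is_endo (k : fieldType) (n : nat) (Q1 : finType) (s t : Q1 -> 'I_n)
  (V : 'I_n -> lmodType k) (M : rep_maps s t V)
  (f : forall i, {linear V i -> V i}) : Prop := is_rep_hom M M f.

Definition has_chain (T : Type) (sub : (T -> Prop) -> Prop) (m : nat) : Prop :=
  exists U : nat -> T -> Prop,
    (forall j, (j <= m)%N -> sub (U j)) /\
    (forall j, (j < m)%N -> (forall x, U j x -> U j.+1 x) /\ exists x, U j.+1 x /\ ~ U j x).

Definition finite_length (T : Type) (sub : (T -> Prop) -> Prop) : Prop :=
  exists N : nat, forall m, has_chain sub m -> (m <= N)%N.

Definition length_is (T : Type) (sub : (T -> Prop) -> Prop) (l : nat) : Prop :=
  has_chain sub l /\ forall m, has_chain sub m -> (m <= l)%N.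

Definition EM_sub_at (k : fieldType) (n : nat) (Q1 : finType) (s t : Q1 -> 'I_n)
  (V : 'I_n -> lmodType k) (M : rep_maps s t V) (i : 'I_n) (U : V i -> Prop) : Prop :=
  U 0 /\ (forall x y, U x -> U y -> U (x + y)) /\ (forall x, U x -> U (- x)) /\
  (forall f, is_endo M f -> forall x, U x -> U (f i x)).

(* E(M)-submodules of the whole module M = (+)_i M_i (finite product) *)
Definition EM_sub (k : fieldType) (n : nat) (Q1 : finType) (s t : Q1 -> 'I_n)
  (V : 'I_n -> lmodType k) (M : rep_maps s t V) (U : (forall i, V i) -> Prop) : Prop :=
  U (fun i => 0) /\ (forall x y, U x -> U y -> U (fun i => x i + y i)) /\
  (forall x, U x -> U (fun i => - x i)) /\
  (forall f, is_endo M f -> forall x, U x -> U (fun i => f i (x i))).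

Definition endo_finite (k : fieldType) (n : nat) (Q1 : finType) (s t : Q1 -> 'I_n)
  (V : 'I_n -> lmodType k) (M : rep_maps s t V) : Prop :=
  finite_length (EM_sub M).

Arguments EM_sub_at {k n Q1 s t V} M i U.

(* Main.v *)
Require Import Defs.
From HB Require Import structures.
From mathcomp Require Import all_boot all_order all_algebra.
From mathcomp Require Import boolp.
Import Order.TTheory GRing.Theory Num.Theory.
Local Open Scope ring_scope.
Set Implicit Arguments. Unset Strict Implicit.


Section Len.
Variables (W : zmodType) (E : Type) (act : E -> W -> W).
Hypothesis actD : forall e x y, act e (x + y) = act e x + act e y.

Lemma act0 e : act e 0 = 0.
Proof. by apply: (addrI (act e 0)); rewrite addr0 -actD addr0. Qed.
Lemma actN e x : act e (- x) = - act e x.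
Proof. by apply/eqP; rewrite -subr_eq0 opprK -actD addNr act0. Qed.

Definition subm (U : W -> Prop) := U 0 /\ (forall x y, U x -> U y -> U (x + y)) /\
  (forall x, U x -> U (- x)) /\ (forall e x, U x -> U (act e x)).

Definition chainU (U : nat -> W -> Prop) (C : W -> Prop) (m : nat) :=
  (forall j, (j <= m)%N -> subm (U j) /\ forall x, U j x -> C x) /\
  (forall j, (j < m)%N -> (forall x, U j x -> U j.+1 x) /\ exists x, U j.+1 x /\ ~ U j x).
Definition chainin C m := exists U, chainU U C m.
Definition boundin C N := forall m, chainin C m -> (m <= N)%N.

Lemma subm_I U V : subm U -> subm V -> subm (fun x => U x /\ V x).
Proof.
move=> [U0 [UD [UN UA]]] [V0 [VD [VN VA]]]; split; first by [].
split; first by move=> x y [? ?] [? ?]; split; auto.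
split; first by move=> x [? ?]; split; auto.
by move=> e x [? ?]; split; auto.
Qed.

Definition msum (U V : W -> Prop) := fun x => exists u v, U u /\ V v /\ x = u + v.

Lemma subm_sum U V : subm U -> subm V -> subm (msum U V).
Proof.
move=> [U0 [UD [UN UA]]] [V0 [VD [VN VA]]]; split; first by exists 0, 0; rewrite addr0.
split.
  move=> x y [u [v [Hu [Hv ->]]]] [u' [v' [Hu' [Hv' ->]]]].
  exists (u + u'), (v + v'); split; first by auto. split; first by auto.
  by rewrite addrACA.
split.
  move=> x [u [v [Hu [Hv ->]]]]; exists (- u), (- v); split; first by auto.
  by split; [auto | rewrite opprD].
move=> e x [u [v [Hu [Hv ->]]]]; exists (act e u), (act e v); split; first by auto.
by split; [auto | rewrite actD].
Qed.

Lemma chainin_mono C C' m : (forall x, C x -> C' x) -> chainin C m -> chainin C' m.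
Proof.
move=> H [U [H1 H2]]; exists U; split=> // j Hj; have [? ?] := H1 j Hj; split; auto.
Qed.

Lemma extract (A : W -> Prop) (P : nat -> W -> Prop) (f : nat -> bool) m :
  (forall j, (j <= m)%N -> subm (P j) /\ forall x, P j x -> A x) ->
  (forall j, (j < m)%N -> forall x, P j x -> P j.+1 x) ->
  (forall j, (j < m)%N -> f j -> exists x, P j.+1 x /\ ~ P j x) ->
  exists U, U (\sum_(j < m) (f j : nat))%N = P m /\ chainU U A (\sum_(j < m) (f j : nat))%N.
Proof.
elim: m => [|m IH] HP Hinc Hstr.
  exists (fun _ => P 0%N); rewrite big_ord0; split=> //; split=> // j.
  by move=> _; apply: HP.
have [U [HU [HU1 HU2]]] := IH (fun j Hj => HP j (leqW Hj))
  (fun j Hj => Hinc j (ltnW Hj)) (fun j Hj => Hstr j (ltnW Hj)).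
rewrite big_ord_recr /=; set l := (\sum_(j < m) (f j : nat))%N in HU HU1 HU2 *.
case Hf: (f m).
- exists (fun j => if (j <= l)%N then U j else P m.+1); rewrite addn1 ltnn; split=> //.
  split.
    move=> j Hj; case: ifP => Hjl; first exact: HU1.
    exact: HP.
  move=> j Hj; have Hj0 : (j <= l)%N by rewrite -ltnS.
  rewrite Hj0; case: ifP => Hjl.
    exact: HU2.
  have Ej : j = l by apply/eqP; rewrite eqn_leq Hj0 leqNgt Hjl.
  rewrite Ej HU; split; first exact: Hinc.
  exact: Hstr.
- exists (fun j => if (j < l)%N then U j else P m.+1); rewrite addn0 ltnn; split=> //.
  split.
    move=> j Hj; case: ifP => Hjl; first exact: HU1 (ltnW Hjl).
    exact: HP.
  move=> j Hj; rewrite Hj; case: ifP => Hjl.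
    by apply: HU2.
  have Ej : j.+1 = l by apply/eqP; rewrite eqn_leq Hj leqNgt Hjl.
  have [Hi [x [Hx Hnx]]] := HU2 j Hj; rewrite Ej HU in Hi Hx.
  split; first by move=> y /Hi; apply: Hinc.
  by exists x; split=> //; apply: Hinc.
Qed.

Lemma sum_bound A B C na nb : subm A -> subm B ->
  (forall x, C x -> exists a b, A a /\ B b /\ x = a + b) ->
  boundin A na -> boundin B nb -> boundin C (na + nb).
Proof.
move=> sA sB HC bA bB m [U [HU1 HU2]].
pose P := fun j x => U j x /\ A x.
pose Q := fun j x => B x /\ msum (U j) A x.
pose f := fun j => `[< exists x, P j.+1 x /\ ~ P j x >].
have HP : forall j, (j <= m)%N -> subm (P j) /\ forall x, P j x -> A x.
  by move=> j Hj; split; [apply: subm_I => //; exact: (HU1 j Hj).1 | move=> x []].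
have HQ : forall j, (j <= m)%N -> subm (Q j) /\ forall x, Q j x -> B x.
  by move=> j Hj; split; [apply: subm_I => //; apply: subm_sum => //; exact: (HU1 j Hj).1 | move=> x []].
have incP : forall j, (j < m)%N -> forall x, P j x -> P j.+1 x.
  by move=> j Hj x [Hx Ha]; split=> //; apply: (HU2 j Hj).1.
have incQ : forall j, (j < m)%N -> forall x, Q j x -> Q j.+1 x.
  move=> j Hj x [Hb [u [a [Hu [Ha E1]]]]]; split=> //; exists u, a; split=> //.
  by apply: (HU2 j Hj).1.
have strP : forall j, (j < m)%N -> f j -> exists x, P j.+1 x /\ ~ P j x.
  by move=> j _ /asboolP.
have strQ : forall j, (j < m)%N -> ~~ f j -> exists x, Q j.+1 x /\ ~ Q j x.
  move=> j Hj /asboolPn Hnf; apply: contrapT => HnQ.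
  have [Hinc [x [Hx Hnx]]] := HU2 j Hj; apply: Hnx.
  have [a [b [Ha [Hb Exb]]]] := HC x ((HU1 j.+1 Hj).2 x Hx).
  have QinQ : forall y, Q j.+1 y -> Q j y.
    by move=> y Hy; apply: contrapT => Hny; apply: HnQ; exists y.
  have PinP : forall y, P j.+1 y -> P j y.
    by move=> y Hy; apply: contrapT => Hny; apply: Hnf; exists y.
  have Qb : Q j.+1 b.
    split=> //; exists x, (- a); split=> //; split; first by case: sA => _ [_ [HN _]]; auto.
    by rewrite Exb addrAC subrr add0r.
  have [_ [u [a' [Hu [Ha' Eb]]]]] := QinQ b Qb.
  have [sUj _] := HU1 j (ltnW Hj).
  have [sUj1 _] := HU1 j.+1 Hj.
  have Pxu : P j.+1 (x - u).
    split.
      case: sUj1 => _ [HD [HN _]]; apply: HD => //; apply: HN; exact: Hinc.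
    have -> : x - u = a + a' by rewrite Exb Eb addrCA addrAC subrr add0r.
    by case: sA => _ [HD _]; auto.
  have [Hxu _] := PinP _ Pxu.
  rewrite -(subrK u x); case: sUj => _ [HD _]; auto.
have [UP [_ cP]] := extract HP incP strP.
have [UQ [_ cQ]] := extract HQ incQ strQ.
have Esum : (\sum_(j < m) (f j : nat) + \sum_(j < m) (~~ f j : nat) = m)%N.
  rewrite -big_split /= (eq_bigr (fun _ => 1%N)) ?sum1_card ?card_ord // => j _.
  by case: (f j).
rewrite -Esum; apply: leq_add; [apply: bA | apply: bB]; eexists; eassumption.
Qed.

Lemma sum_chain A B C na nb : subm A -> subm B ->
  (forall x, A x -> B x -> x = 0) ->
  (forall a b, A a -> B b -> C (a + b)) ->
  chainin A na -> chainin B nb -> chainin C (na + nb).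
Proof.
move=> sA sB HAB HC [UA [HA1 HA2]] [UB [HB1 HB2]].
exists (fun j => if (j < na)%N then UA j else msum (UA na) (UB (j - na)%N)); split.
  move=> j Hj; case: ifP => Hjn.
    have [s1 s2] := HA1 j (ltnW Hjn); split=> // x Hx.
    by rewrite -(addr0 x); apply: HC; [exact: s2 | case: sB].
  have Hjb : (j - na <= nb)%N by rewrite leq_subLR.
  have [s1 s2] := HA1 na (leqnn _); have [t1 t2] := HB1 _ Hjb.
  split; first exact: subm_sum.
  by move=> x [u [v [Hu [Hv ->]]]]; apply: HC; auto.
move=> j Hj; case Hj1: (j.+1 < na)%N.
  have Hjn : (j < na)%N by apply: ltnW.
  by rewrite Hjn; apply: HA2.
case Hjn: (j < na)%N.
  have Ej : na = j.+1 by apply/eqP; rewrite eqn_leq Hjn andbT leqNgt Hj1.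
  have [Hi [x [Hx Hnx]]] := HA2 j Hjn; rewrite -Ej in Hi Hx.
  have [t1 _] := HB1 0%N (leq0n _).
  rewrite -Ej subnn; split.
    by move=> y Hy; exists y, 0; split; [exact: Hi | split; [case: t1 | rewrite addr0]].
  by exists x; split=> //; exists x, 0; split=> //; split; [case: t1 | rewrite addr0].
have Hnj : (na <= j)%N by rewrite leqNgt Hjn.
have Hjb : (j - na < nb)%N by rewrite ltn_subLR.
rewrite subSn //; have [Hi [y [Hy Hny]]] := HB2 _ Hjb.
have [s1 s2] := HA1 na (leqnn _).
have [t1 t2] := HB1 _ (ltnW Hjb); have [t1' t2'] := HB1 _ Hjb.
split.
  by move=> x [u [v [Hu [Hv ->]]]]; exists u, v; split=> //; split=> //; apply: Hi.
exists y; split.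
  by exists 0, y; split; [case: s1 | split; [| rewrite add0r]].
move=> [u [v [Hu [Hv Ey]]]]; apply: Hny.
have Bu : B u.
  have -> : u = y - v by rewrite Ey addrK.
  by case: sB => _ [HD [HN _]]; apply: HD; [apply: t2' | apply: HN; apply: t2].
have u0 := HAB u (s2 u Hu) Bu.
by rewrite Ey u0 add0r.
Qed.
End Len.

Lemma transfer (W1 W2 : zmodType) (E : Type) (act1 : E -> W1 -> W1) (act2 : E -> W2 -> W2)
  (g : W1 -> W2) (C1 : W1 -> Prop) (C2 : W2 -> Prop) m :
  (forall x y, g (x + y) = g x + g y) -> (forall e x, g (act1 e x) = act2 e (g x)) ->
  (forall x y, C1 x -> C1 y -> g x = g y -> x = y) -> (forall x, C1 x -> C2 (g x)) ->
  chainin act1 C1 m -> chainin act2 C2 m.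
Proof.
move=> gD gA ginj gC [U [H1 H2]].
have g0 : g 0 = 0 by apply: (addrI (g 0)); rewrite addr0 -gD addr0.
have gN : forall x, g (- x) = - g x.
  by move=> x; apply/eqP; rewrite -subr_eq0 opprK -gD addNr g0.
exists (fun j y => exists x, U j x /\ g x = y); split.
  move=> j Hj; have [[U0 [UD [UN UA]]] HC] := H1 j Hj; split.
    split; first by exists 0.
    split; first by move=> _ _ [x [Hx <-]] [y [Hy <-]]; exists (x + y); split; auto.
    split; first by move=> _ [x [Hx <-]]; exists (- x); split; auto.
    by move=> e _ [x [Hx <-]]; exists (act1 e x); split; auto.
  by move=> _ [x [Hx <-]]; auto.
move=> j Hj; have [Hi [x [Hx Hnx]]] := H2 j Hj; split.
  by move=> _ [y [Hy <-]]; exists y; split; auto.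
exists (g x); split; first by exists x.
move=> [y [Hy Ey]]; apply: Hnx.
have -> : x = y.
  apply: ginj => //; first exact: (H1 j.+1 Hj).2.
  exact: (H1 j (ltnW Hj)).2.
done.
Qed.

Section DP.
Variables (k : fieldType) (P : Type) (F : P -> lmodType k).
Definition dprod := forall p, F p.
HB.instance Definition _ := Choice.on dprod.
Definition dz : dprod := fun p => 0.
Definition dadd (x y : dprod) : dprod := fun p => x p + y p.
Definition dopp (x : dprod) : dprod := fun p => - x p.
Lemma daddA : associative dadd.
Proof. move=> x y z; apply: functional_extensionality_dep => p; exact: addrA. Qed.
Lemma daddC : commutative dadd.
Proof. move=> x y; apply: functional_extensionality_dep => p; exact: addrC. Qed.
Lemma dadd0 : left_id dz dadd.
Proof. move=> x; apply: functional_extensionality_dep => p; exact: add0r. Qed.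
Lemma daddN : left_inverse dz dopp dadd.
Proof. move=> x; apply: functional_extensionality_dep => p; exact: addNr. Qed.
HB.instance Definition _ := GRing.isZmodule.Build dprod daddA daddC dadd0 daddN.
Lemma dprodE (x y : dprod) p : (x + y) p = x p + y p. Proof. by []. Qed.
Lemma dprodN (x : dprod) p : (- x) p = - x p. Proof. by []. Qed.
Lemma dprod0 p : (0 : dprod) p = 0. Proof. by []. Qed.
End DP.

Lemma bound_transfer (W1 W2 : zmodType) (E : Type) (act1 : E -> W1 -> W1) (act2 : E -> W2 -> W2)
  (g : W1 -> W2) (C1 : W1 -> Prop) (C2 : W2 -> Prop) N :
  (forall x y, g (x + y) = g x + g y) -> (forall e x, g (act1 e x) = act2 e (g x)) ->
  (forall x y, C1 x -> C1 y -> g x = g y -> x = y) -> (forall x, C1 x -> C2 (g x)) ->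
  boundin act2 C2 N -> boundin act1 C1 N.
Proof. by move=> gD gA ginj gC HB m Hm; apply: HB; apply: (transfer gD gA ginj gC). Qed.

Unset Implicit Arguments.
Section Prod.
Variables (k : fieldType) (n : nat) (V : 'I_n -> lmodType k) (E : Type)
  (actV : forall (e : E) i, V i -> V i) (D : 'I_n -> nat).
Hypothesis actVD : forall e i x y, actV e i (x + y) = actV e i x + actV e i y.
Hypothesis baseC : forall i, chainin (fun e => actV e i) (fun _ => True) (D i).
Hypothesis baseB : forall i, boundin (fun e => actV e i) (fun _ => True) (D i).
Variables (P : finType) (tau : P -> 'I_n).

Definition WP := dprod (fun p => V (tau p)).
Definition actW e (w : WP) : WP := fun p => actV e (tau p) (w p).
Lemma actWD e x y : actW e (x + y) = actW e x + actW e y.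
Proof. by apply: functional_extensionality_dep => p; rewrite /actW /= actVD. Qed.

Definition CS (s : seq P) (w : WP) := forall q, q \notin s -> w q = 0.

Lemma subm_CS s : subm actW (CS s).
Proof.
split; first by [].
split; first by move=> x y Hx Hy q Hq; rewrite dprodE Hx ?Hy // addr0.
split; first by move=> x Hx q Hq; rewrite dprodN Hx // oppr0.
move=> e x Hx q Hq; rewrite /actW Hx //.
exact: (act0 (fun e x y => actVD e (tau q) x y)).
Qed.

Definition single (p : P) (v : V (tau p)) : WP :=
  fun q => if p =P q is ReflectT e then eq_rect p (fun q => V (tau q)) v q e else 0.
Lemma single_id p v : single p v p = v.
Proof. by rewrite /single; case: eqP => // e; rewrite (eq_irrelevance e (erefl p)). Qed.
Lemma single_ne p v q : q != p -> single p v q = 0.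
Proof. by rewrite /single; case: eqP => // e; destruct e; rewrite eqxx. Qed.
Lemma singleD p v v' : single p (v + v') = single p v + single p v'.
Proof.
apply: functional_extensionality_dep => q; rewrite dprodE /single.
by case: eqP => [e|_]; [destruct e | rewrite addr0].
Qed.
Lemma singleA p e v : single p (actV e (tau p) v) = actW e (single p v).
Proof.
apply: functional_extensionality_dep => q; rewrite /actW /single.
case: eqP => [e'|_]; [by destruct e' | by rewrite (act0 (fun e x y => actVD e (tau q) x y))].
Qed.

Lemma CS_prod s : uniq s ->
  chainin actW (CS s) (\sum_(p <- s) D (tau p))%N /\ boundin actW (CS s) (\sum_(p <- s) D (tau p))%N.
Proof.
elim: s => [|p s IH] /=.
  rewrite big_nil; split.
    exists (fun _ => CS [::]); split=> // j _; split=> //; exact: subm_CS.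
  move=> [|m] // [U [H1 H2]]; have [_ [x [Hx Hnx]]] := H2 0%N isT.
  have Hx0 : x = 0.
    apply: functional_extensionality_dep => q; exact: (H1 1%N isT).2 x Hx q isT.
  have [[U00 _] _] := H1 0%N isT; rewrite Hx0 in Hnx; by case: (Hnx U00).
move=> /andP [pns us]; have [IHc IHb] := IH us; rewrite big_cons.
have HAB : forall x, CS [:: p] x -> CS s x -> x = 0.
  move=> x H1 H2; apply: functional_extensionality_dep => q.
  case: (boolP (q \in s)) => qs; last exact: H2.
  apply: H1; rewrite inE; apply/negP => /eqP E1; move: pns; rewrite -E1 qs.
  done.
have HC : forall a b, CS [:: p] a -> CS s b -> CS (p :: s) (a + b).
  move=> a b Ha Hb q; rewrite inE negb_or => /andP [q1 q2].
  by rewrite dprodE Ha ?Hb ?addr0 // inE.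
have sD : forall x y : V (tau p), single p (x + y) = single p x + single p y by move=> x y; exact: singleD.
have Hinj : forall x y : V (tau p), True -> True -> single p x = single p y -> x = y.
  by move=> x y _ _ E1; rewrite -(single_id p x) E1 single_id.
have Hsin : forall x : V (tau p), True -> CS [:: p] (single p x).
  by move=> x _ q; rewrite inE => /single_ne.
have Bc : chainin actW (CS [:: p]) (D (tau p)).
  apply: (transfer (act1 := fun e => actV e (tau p))) sD _ Hinj Hsin (baseC _).
  by move=> e x; exact: singleA.
have Bb : boundin actW (CS [:: p]) (D (tau p)).
  apply: (bound_transfer (g := fun w : WP => w p)) _ _ _ _ (baseB (tau p)) => //.
  move=> x y Hx Hy Exy; apply: functional_extensionality_dep => q.
  case: (eqVneq q p) => [->|ne] //.
  by rewrite Hx ?Hy // inE.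
split.
  by apply: (sum_chain actWD (subm_CS [:: p]) (subm_CS s) HAB HC).
apply: (sum_bound actWD (subm_CS [:: p]) (subm_CS s)) => // x Hx.
exists (single p (x p)), (x - single p (x p)); split.
  by move=> q; rewrite inE => /single_ne.
split; last by rewrite addrC subrK.
move=> q qs; rewrite dprodE dprodN.
case: (eqVneq q p) => [->|ne].
  by rewrite single_id subrr.
by rewrite single_ne // Hx ?subr0 // inE negb_or ne.
Qed.
End Prod.


Definition hfun (k : fieldType) (n : nat) (V : 'I_n -> lmodType k) (d : 'I_n -> nat)
  (w : forall p : {i : 'I_n & 'I_(d i)}, V (tag p)) (i : 'I_n) (x : 'rV[k]_(d i)) : V i :=
  \sum_(j < d i) x 0 j *: (w (existT _ i j) : V i).

Lemma hfun_is_linear k n V d w i : linear (@hfun k n V d w i).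
Proof.
move=> a u v; rewrite /hfun scaler_sumr -big_split /=; apply: eq_bigr => j _.
by rewrite !mxE scalerDl scalerA.
Qed.

HB.instance Definition _ (k : fieldType) (n : nat) (V : 'I_n -> lmodType k) (d : 'I_n -> nat)
  (w : forall p : {i : 'I_n & 'I_(d i)}, V (tag p)) (i : 'I_n) :=
  GRing.isLinear.Build k _ _ _ (@hfun k n V d w i) (@hfun_is_linear k n V d w i).

Lemma sumtag (I : finType) (J : I -> finType) (F : I -> nat) :
  (\sum_(p : {i : I & J i}) F (tag p) = \sum_i #|J i| * F i)%N.
Proof.
rewrite -(sig_big_dep (J := J) predT (fun _ => predT) (fun i _ => F i)) /=.
by apply: eq_bigr => i _; rewrite sum_nat_const mulnC.
Qed.

Section Main.
Variables (k : fieldType) (n : nat) (Q1 : finType) (s t : Q1 -> 'I_n)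
  (d : 'I_n -> nat) (X : rep_maps s t (fun i => 'rV[k]_(d i)))
  (V : 'I_n -> lmodType k) (M : rep_maps s t V).

Definition EE := {f : forall i, {linear V i -> V i} | is_endo M f}.
Definition actV (e : EE) (i : 'I_n) (x : V i) : V i := sval e i x.
Lemma actVD e i x y : actV e i (x + y) = actV e i x + actV e i y.
Proof. exact: raddfD. Qed.
Definition tauD (p : {i : 'I_n & 'I_(d i)}) := tag p.
Definition tauC (p : {a : Q1 & 'I_(d (s a))}) := t (tag p).
Definition WD := WP k n V _ tauD.
Definition WC := WP k n V _ tauC.

Definition phi (w : WD) : WC := fun p =>
  match p as p0 return V (tauC p0) with existT a j =>
    M a (w (existT _ (s a) j)) - \sum_(j' < d (t a)) (X a (delta_mx 0 j)) 0 j' *: (w (existT _ (t a) j') : V (t a))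
  end.

Lemma phiD x y : phi (x + y) = phi x + phi y.
Proof.
apply: functional_extensionality_dep => -[a j].
rewrite dprodE /= !dprodE raddfD /=.
rewrite (eq_bigr (fun j' => (X a (delta_mx 0 j)) 0 j' *: (x (existT _ (t a) j') : V (t a)) +
   (X a (delta_mx 0 j)) 0 j' *: (y (existT _ (t a) j') : V (t a)))); last first.
  by move=> j' _; rewrite dprodE scalerDr.
by rewrite big_split /= opprD addrACA.
Qed.

Lemma phiA e w : phi (actW k n V EE actV _ tauD e w) = actW k n V EE actV _ tauC e (phi w).
Proof.
apply: functional_extensionality_dep => -[a j].
rewrite /actW /actV /=; case: e => f Hf /=; rewrite raddfB /= Hf (linear_sum (f (t a))).
congr (_ - _); apply: eq_bigr => j' _.
by rewrite linearZ.
Qed.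


Lemma phiB x y : phi (x - y) = phi x - phi y.
Proof. by apply: (addrI (phi y)); rewrite -phiD addrC subrK addrC subrK. Qed.

Lemma hfun_delta (w : WD) i (j : 'I_(d i)) : hfun k n V d w i (delta_mx 0 j) = w (existT _ i j).
Proof.
rewrite /hfun (bigD1 j) //= mxE !eqxx /= scale1r big1 ?addr0 // => j' ne.
by rewrite mxE (negbTE ne) andbF scale0r.
Qed.

Lemma phi_ker (Hno : ~ exists g : forall i, {linear 'rV[k]_(d i) -> V i},
    is_rep_hom X M g /\ exists (i : 'I_n) (x : 'rV[k]_(d i)), g i x != 0) w :
  phi w = 0 -> w = 0.
Proof.
move=> H0.
have Hhom : is_rep_hom X M (fun i => hfun k n V d w i : {linear _ -> _}).
  move=> a x /=.
  have H1 : forall j, M a (w (existT _ (s a) j)) = hfun k n V d w (t a) (X a (delta_mx 0 j)).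
    move=> j; have := congr1 (fun f : WC => f (existT _ a j)) H0.
    by rewrite /= dprod0 => /eqP; rewrite subr_eq0 => /eqP.
  rewrite {1}(row_sum_delta x) !linear_sum /=.
  by apply: eq_bigr => j _; rewrite !linearZ /= H1.
apply: functional_extensionality_dep => -[i j].
rewrite dprod0 -hfun_delta; apply: contrapT => Hne; apply: Hno.
exists (fun i => hfun k n V d w i : {linear _ -> _}); split=> //.
by exists i, (delta_mx 0 j); apply/eqP.
Qed.
End Main.

Theorem lemma8 (k : fieldType) (n : nat) (Q1 : finType) (s t : Q1 -> 'I_n)
  (d : 'I_n -> nat) (X : rep_maps s t (fun i => 'rV[k]_(d i)))
  (V : 'I_n -> lmodType k) (M : rep_maps s t V) (D : 'I_n -> nat) :
  quiver_connected s t -> quiver_acyclic s t ->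
  endo_finite M ->
  (forall i, length_is (EM_sub_at M i) (D i)) ->
  (0 < euler_form s t d D)%R ->
  exists g : forall i, {linear 'rV[k]_(d i) -> V i},
    is_rep_hom X M g /\ exists (i : 'I_n) (x : 'rV[k]_(d i)), g i x != 0.
Proof.
move=> _ _ _ HD Heul; apply: contrapT => Hno.
pose aV := actV k n Q1 s t V M.
have baseC : forall i, chainin (fun e => aV e i) (fun _ => True) (D i).
  move=> i; have [[U [H1 H2]] _] := HD i; exists U; split=> // j Hj.
  have [U0 [UD [UN UA]]] := H1 j Hj; split=> //; split=> //; split=> //; split=> //.
  move=> e x Hx; exact: (UA _ (svalP e) x Hx).
have baseB : forall i, boundin (fun e => aV e i) (fun _ => True) (D i).
  move=> i m [U [H1 H2]]; apply: (HD i).2; exists U; split=> // j Hj.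
  have [[U0 [UD [UN UA]]] _] := H1 j Hj; split=> //; split=> //; split=> //.
  move=> f Hf x Hx; exact: (UA (exist _ f Hf) x Hx).
have aVD := actVD k n Q1 s t V M.
have [cD _] := CS_prod k n V _ aV D aVD baseC baseB _ (tauD n d) _ (enum_uniq predT).
have [_ bC] := CS_prod k n V _ aV D aVD baseC baseB _ (tauC n Q1 s t d) _ (enum_uniq predT).
have ginj : forall x y : WD k n d V, True -> True ->
    phi k n Q1 s t d X V M x = phi k n Q1 s t d X V M y -> x = y.
  move=> x y _ _ Exy; apply/eqP; rewrite -subr_eq0; apply/eqP; apply: (phi_ker k n Q1 s t d X V M Hno).
  by rewrite phiB Exy subrr.
have gC : forall x : WD k n d V, True -> CS k n V _ (tauC n Q1 s t d) (enum predT) (phi k n Q1 s t d X V M x).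
  by move=> x _ q; rewrite mem_enum.
have Hle := bC _ (transfer (phiD k n Q1 s t d X V M) (phiA k n Q1 s t d X V M)
  ginj gC (chainin_mono (fun x _ => I) cD)).
move: Hle; rewrite !big_enum /= /tauD /tauC.
rewrite (eq_bigl xpredT) // [X in (_ <= X)%N](eq_bigl xpredT) //.
rewrite (@sumtag _ (fun i => 'I_(d i)) D) (@sumtag _ (fun a => 'I_(d (s a))) (fun a => D (t a))).
under eq_bigr do rewrite card_ord.
under [X in (_ <= X)%N]eq_bigr do rewrite card_ord.
move: Heul; rewrite /euler_form.
have sumZ : forall (I : finType) (F : I -> nat), \sum_i (F i)%:Z = (\sum_i F i)%:Z :> int.
  by move=> I F; rewrite (big_morph Posz PoszD (erefl _)).
rewrite !sumZ subr_gt0 ltz_nat => H1 H2.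
by move: H1; rewrite ltnNge H2.
Qed.
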